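(* Let $p\in(0,1]$ and let $\bar Q=(\bar q_{j,k})_{j,k\geq1}$ be the generator on $\mathbb N=\{1,2,\dots\}$ with $\bar q_{j,k}=\binom{j-1}{k-1}p^k(1-p)^{j-k}$ for $1\leq k\leq j-1$, $\bar q_{j,j+1}=(j+1)p$, $\bar q_{j,j}=p^j-(2+j)p$, and $\bar q_{j,k}=0$ otherwise. Let $q>0$ satisfy $-1+q+p^q\geq0$. Then the stationary distribution of $\bar Q$, if it exists, does not have a finite $q$th moment. *)

(* Defs.v *)
From Stdlib Require Import Reals Lra Arith Bool.
From Coquelicot Require Import Coquelicot.
Open Scope R_scope.

(* Generator Qbar on states 1,2,3,... (states are nats j >= 1; index 0 unused). *)
Definition qbar (p : R) (j k : nat) : R :=
  if (andb (1 <=? k)%nat (k <=? j - 1)%nat) then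
    Binomial.C (j - 1)%nat (k - 1)%nat * p ^ k * (1 - p) ^ (j - k)%nat
  else if (k =? j + 1)%nat then INR (j + 1)%nat * p
  else if (k =? j)%nat then p ^ j - (2 + INR j) * p
  else 0.

Definition stationary (p : R) (pi : nat -> R) : Prop :=
  (forall j, (1 <= j)%nat -> 0 <= pi j) /\
  is_series (fun n => pi (S n)) 1 /\
  (forall k, (1 <= k)%nat -> is_series (fun n => pi (S n) * qbar p (S n) k) 0).

Definition finite_moment (q : R) (pi : nat -> R) : Prop :=
  ex_series (fun n => Rpower (INR (S n)) q * pi (S n)).

(* Main.v *)
Require Import Defs.
From Stdlib Require Import Reals Lra Lia Arith Classical.
From Coquelicot Require Import Coquelicot.
Open Scope R_scope.

Fixpoint sm (f : nat -> R) (n : nat) : R :=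
  match n with O => 0 | S n => sm f n + f n end.

Lemma sm_ext f g n : (forall i, (i < n)%nat -> f i = g i) -> sm f n = sm g n.
Proof. induction n; simpl; intros H; [reflexivity|]. rewrite IHn by (intros; apply H; lia). rewrite H by lia. reflexivity. Qed.

Lemma sm_le f g n : (forall i, (i < n)%nat -> f i <= g i) -> sm f n <= sm g n.
Proof. induction n; simpl; intros H; [lra|]. assert (sm f n <= sm g n) by (apply IHn; intros; apply H; lia). assert (f n <= g n) by (apply H; lia). lra. Qed.

Lemma sm_plus f g n : sm (fun i => f i + g i) n = sm f n + sm g n.
Proof. induction n; simpl; [lra|]. rewrite IHn. ring. Qed.

Lemma sm_scal c f n : sm (fun i => c * f i) n = c * sm f n.
Proof. induction n; simpl; [lra|]. rewrite IHn. ring. Qed.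

Lemma sm_opp f n : sm (fun i => - f i) n = - sm f n.
Proof. induction n; simpl; [lra|]. rewrite IHn. ring. Qed.

Lemma sm_nonneg f n : (forall i, (i < n)%nat -> 0 <= f i) -> 0 <= sm f n.
Proof. induction n; simpl; intros H; [lra|]. assert (0 <= sm f n) by (apply IHn; intros; apply H; lia). assert (0 <= f n) by (apply H; lia). lra. Qed.

Lemma sm_mono f n m : (n <= m)%nat -> (forall i, 0 <= f i) -> sm f n <= sm f m.
Proof. intros Hnm H. induction Hnm; simpl; [lra|]. specialize (H m). lra. Qed.

Lemma sm_tail0 f n m : (n <= m)%nat -> (forall i, (n <= i)%nat -> (i < m)%nat -> f i = 0) -> sm f m = sm f n.
Proof. intros Hnm. induction Hnm; intros H; simpl; [reflexivity|]. rewrite IHHnm by (intros; apply H; lia). rewrite H by lia. ring. Qed.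

Lemma sm_R0 f n : sm f (S n) = sum_f_R0 f n.
Proof. induction n; simpl; [ring|]. simpl in IHn. rewrite <- IHn. ring. Qed.

Lemma sm_ind1 k c m : (k < m)%nat -> sm (fun i => if Nat.eqb i k then c else 0) m = c.
Proof.
  intros H. induction H; simpl.
  - rewrite (sm_ext _ (fun _ => 0)). 2:{ intros i Hi. destruct (Nat.eqb_spec i k); [lia|reflexivity]. }
    rewrite Nat.eqb_refl. clear. induction k; simpl; lra.
  - rewrite IHle. destruct (Nat.eqb_spec m k); [lia|ring].
Qed.

Lemma sm_ge a k m : (k <= m)%nat -> sm (fun i => if Nat.leb k i then a i else 0) m = sm a m - sm a k.
Proof.
  intros H. induction H; simpl.
  - rewrite (sm_ext _ (fun _ => 0)). 2:{ intros i Hi. destruct (Nat.leb_spec k i); [lia|reflexivity]. }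
    assert (sm (fun _ => 0) k = 0) by (clear; induction k; simpl; lra). lra.
  - rewrite IHle. destruct (Nat.leb_spec k m); [|lia]. ring.
Qed.

Definition w (p : R) (n i : nat) : R := Binomial.C n i * p ^ (S i) * (1 - p) ^ (n - i).

Lemma C_nonneg n k : 0 <= Binomial.C n k.
Proof. unfold Binomial.C. apply Rmult_le_pos. apply pos_INR.
  left. apply Rinv_0_lt_compat. apply Rmult_lt_0_compat; apply lt_0_INR, lt_O_fact. Qed.

Lemma w_nonneg p n i : 0 <= p <= 1 -> 0 <= w p n i.
Proof. intros H. unfold w. apply Rmult_le_pos; [apply Rmult_le_pos|].
  apply C_nonneg. apply pow_le; lra. apply pow_le; lra. Qed.

Lemma B0 p n : sm (w p n) (S n) = p.
Proof.
  rewrite sm_R0. unfold w.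
  rewrite (sum_eq _ (fun i => (Binomial.C n i * p ^ i * (1 - p) ^ (n - i)) * p)).
  2:{ intros i _. simpl. ring. }
  rewrite <- scal_sum. rewrite <- binomial. replace (p + (1 - p)) with 1 by ring. rewrite pow1. ring.
Qed.

Lemma C_shift n i : (i <= n)%nat -> Binomial.C n i / INR (S i) = Binomial.C (S n) (S i) / INR (S n).
Proof.
  intros H. unfold Binomial.C. replace (S n - S i)%nat with (n - i)%nat by lia.
  change (Factorial.fact (S n)) with (S n * Factorial.fact n)%nat.
  change (Factorial.fact (S i)) with (S i * Factorial.fact i)%nat.
  rewrite !mult_INR.
  assert (INR (S n) <> 0) by (apply not_0_INR; lia).
  assert (INR (S i) <> 0) by (apply not_0_INR; lia).
  pose proof (INR_fact_neq_0 n). pose proof (INR_fact_neq_0 i). pose proof (INR_fact_neq_0 (n - i)).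
  field. repeat split; auto.
Qed.

Lemma B1 p n : 0 <= p <= 1 -> sm (fun i => w p n i / INR (S i)) (S n) <= 1 / INR (S n).
Proof.
  intros Hp.
  rewrite (sm_ext _ (fun i => / INR (S n) * (Binomial.C (S n) (S i) * p ^ (S i) * (1 - p) ^ (S n - S i)))).
  2:{ intros i Hi. unfold w. replace (S n - S i)%nat with (n - i)%nat by lia.
      assert (Binomial.C n i / INR (S i) = Binomial.C (S n) (S i) / INR (S n)) by (apply C_shift; lia).
      unfold Rdiv in *. transitivity (Binomial.C n i * / INR (S i) * p ^ S i * (1 - p) ^ (n - i)); [ring|].
      rewrite H. ring. }
  rewrite sm_scal. rewrite sm_R0.
  assert (Hb := binomial p (1 - p) (S n)). replace (p + (1 - p)) with 1 in Hb by ring. rewrite pow1 in Hb.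
  rewrite decomp_sum in Hb by lia. simpl pred in Hb.
  assert (0 <= Binomial.C (S n) 0 * p ^ 0 * (1 - p) ^ (S n - 0)).
  { apply Rmult_le_pos; [apply Rmult_le_pos|]. apply C_nonneg. apply pow_le; lra. apply pow_le; lra. }
  assert (0 < INR (S n)) by (apply lt_0_INR; lia).
  unfold Rdiv. rewrite Rmult_1_l. rewrite <- (Rmult_1_r (/ INR (S n))) at 2.
  apply Rmult_le_compat_l. left. apply Rinv_0_lt_compat; auto. lra.
Qed.

Lemma PW q x c : 0 < q -> 0 < x -> 0 < c -> Rpower c q * (1 + q - q * c / x) <= Rpower x q.
Proof.
  intros Hq Hx Hc. unfold Rpower.
  set (E := ln x - ln c).
  replace (q * ln x) with (q * ln c + q * E) by (unfold E; ring).
  rewrite exp_plus.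
  assert (H1 := exp_ineq1_le (q * E)).
  assert (H2 := exp_ineq1_le (- E)).
  assert (exp (- E) = c / x).
  { unfold E. replace (- (ln x - ln c)) with (ln c - ln x) by ring. unfold Rminus; rewrite exp_plus, exp_Ropp, !exp_ln; auto. }
  assert (E >= 1 - c / x) by lra.
  assert (0 < exp (q * ln c)) by apply exp_pos.
  apply Rmult_le_compat_l; [lra|].
  assert (q * E >= q * (1 - c / x)) by (apply Rmult_ge_compat_l; lra).
  unfold Rdiv in *. lra.
Qed.

Lemma PWs q x c : 0 < q -> 0 < c -> c < x -> Rpower c q * (1 + q - q * c / x) < Rpower x q.
Proof.
  intros Hq Hc Hcx. assert (Hx : 0 < x) by lra. unfold Rpower.
  set (E := ln x - ln c).
  assert (HE : 0 < E) by (unfold E; assert (ln c < ln x) by (apply ln_increasing; lra); lra).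
  replace (q * ln x) with (q * ln c + q * E) by (unfold E; ring).
  rewrite exp_plus.
  assert (H1 := exp_ineq1 (q * E)).
  assert (q * E <> 0) by (apply Rgt_not_eq, Rmult_lt_0_compat; lra).
  specialize (H1 H).
  assert (H2 := exp_ineq1_le (- E)).
  assert (exp (- E) = c / x).
  { unfold E. replace (- (ln x - ln c)) with (ln c - ln x) by ring. unfold Rminus; rewrite exp_plus, exp_Ropp, !exp_ln; auto. }
  assert (E >= 1 - c / x) by lra.
  assert (0 < exp (q * ln c)) by apply exp_pos.
  apply Rmult_lt_compat_l; [lra|].
  assert (q * E >= q * (1 - c / x)) by (apply Rmult_ge_compat_l; lra).
  unfold Rdiv in *. lra.
Qed.

Section S.
Variables (p q : R) (hp0 : 0 < p) (hp1 : p <= 1) (hq : 0 < q) (hpq : 0 <= -1 + q + Rpower p q).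

Definition f (k : nat) : R := Rpower (INR k) q.

Lemma f_pos k : 0 < f k.
Proof. unfold f, Rpower. apply exp_pos. Qed.

Lemma f_mono a b : (1 <= a)%nat -> (a <= b)%nat -> f a <= f b.
Proof. intros. unfold f. apply Rle_Rpower_l. lra. split. apply lt_0_INR; lia. apply le_INR; lia. Qed.

Lemma SB n : p * Rpower (INR (S n) * p) q <= sm (fun i => w p n i * f (S i)) (S n).
Proof.
  set (c := INR (S n) * p). set (A := Rpower c q).
  assert (HSn : 0 < INR (S n)) by (apply lt_0_INR; lia).
  assert (Hc : 0 < c) by (unfold c; apply Rmult_lt_0_compat; lra).
  assert (HA : 0 < A) by (unfold A, Rpower; apply exp_pos).
  apply Rle_trans with (sm (fun i => (A * (1 + q)) * w p n i + (- (A * q * c)) * (w p n i / INR (S i))) (S n)).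
  2:{ apply sm_le. intros i Hi. assert (Hw := w_nonneg p n i ltac:(lra)).
      assert (Hsi : 0 < INR (S i)) by (apply lt_0_INR; lia).
      assert (H := PW q (INR (S i)) c hq Hsi Hc). fold A in H. unfold f.
      apply Rle_trans with (w p n i * (A * (1 + q - q * c / INR (S i)))).
      right. unfold Rdiv. ring. apply Rmult_le_compat_l; auto. }
  rewrite sm_plus, !sm_scal, B0.
  assert (H1 := B1 p n ltac:(lra)).
  assert (0 <= A * q * c) by (apply Rmult_le_pos; [apply Rmult_le_pos|]; lra).
  assert (A * q * c * sm (fun i => w p n i / INR (S i)) (S n) <= A * q * c * (1 / INR (S n)))
    by (apply Rmult_le_compat_l; auto).
  assert (A * q * c * (1 / INR (S n)) = A * q * p) by (unfold c; field; lra).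
  nra.
Qed.

Definition Dv (n : nat) : R :=
  Rpower (INR (S n) * p) q + INR (S n + 1) * f (S (S n)) - (2 + INR (S n)) * f (S n).

Lemma Dv_pos n : 0 < Dv n.
Proof.
  unfold Dv, f. set (J := INR (S n)).
  assert (HJ : 0 < J) by (apply lt_0_INR; lia).
  replace (INR (S n + 1)) with (J + 1) by (unfold J; rewrite plus_INR; simpl; ring).
  replace (INR (S (S n))) with (J + 1) by (unfold J; rewrite (S_INR (S n)); ring).
  rewrite <- Rpower_mult_distr by lra.
  assert (H := PWs q (J + 1) J hq HJ ltac:(lra)).
  assert (HR : 0 < Rpower J q) by (unfold Rpower; apply exp_pos).
  assert (Rpower J q * (1 - q) <= Rpower J q * Rpower p q) by (apply Rmult_le_compat_l; lra).
  assert ((J + 1) * (Rpower J q * (1 + q - q * J / (J + 1))) = Rpower J q * (J + 1 + q)) by (field; lra).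
  assert ((J + 1) * (Rpower J q * (1 + q - q * J / (J + 1))) < (J + 1) * Rpower (J + 1) q)
    by (apply Rmult_lt_compat_l; lra).
  nra.
Qed.

Ltac qb := unfold qbar;
  destruct (Nat.leb_spec 1 _); destruct (Nat.leb_spec _ (_ - 1)); simpl andb;
  destruct (Nat.eqb_spec _ (_ + 1)); destruct (Nat.eqb_spec _ _); try lia.

Lemma qbar_w n i : (i < n)%nat -> qbar p (S n) (S i) = w p n i.
Proof. intros H. unfold qbar. replace (S n - 1)%nat with n by lia. replace (S i - 1)%nat with i by lia.
  destruct (Nat.leb_spec 1 (S i)); [|lia]. destruct (Nat.leb_spec (S i) n); [|lia]. simpl.
  unfold w. replace (S n - S i)%nat with (n - i)%nat by lia. reflexivity. Qed.

Lemma qbar_d n : qbar p (S n) (S n) = p ^ (S n) - (2 + INR (S n)) * p.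
Proof. unfold qbar. destruct (Nat.leb_spec (S n) (S n - 1)); [lia|]. rewrite Bool.andb_false_r.
  destruct (Nat.eqb_spec (S n) (S n + 1)); [lia|]. rewrite Nat.eqb_refl. reflexivity. Qed.

Lemma qbar_u n : qbar p (S n) (S (S n)) = INR (S n + 1) * p.
Proof. unfold qbar. destruct (Nat.leb_spec (S (S n)) (S n - 1)); [lia|]. rewrite Bool.andb_false_r.
  destruct (Nat.eqb_spec (S (S n)) (S n + 1)); [reflexivity|lia]. Qed.

Lemma qbar_0 n k : (S n + 1 < k)%nat -> qbar p (S n) k = 0.
Proof. intros H. unfold qbar. destruct (Nat.leb_spec k (S n - 1)); [lia|]. rewrite Bool.andb_false_r.
  destruct (Nat.eqb_spec k (S n + 1)); [lia|]. destruct (Nat.eqb_spec k (S n)); [lia|]. reflexivity. Qed.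

Definition T (N j : nat) : R := sm (fun i => qbar p j (S i) * (f N - f (S i))) N.

Lemma T_low N n : (S n < N)%nat -> T N (S n) <= - (p * Dv n).
Proof.
  intros H. unfold T.
  rewrite (sm_tail0 _ (S (S n)) N) by (try lia; intros i Hi _; rewrite qbar_0 by lia; ring).
  simpl sm at 1. rewrite qbar_d, qbar_u.
  rewrite (sm_ext _ (fun i => f N * w p n i + - (w p n i * f (S i)))) by (intros i Hi; rewrite qbar_w by lia; ring).
  rewrite sm_plus, sm_scal, sm_opp.
  assert (HB := B0 p n). simpl sm in HB.
  assert (HS := SB n). simpl sm in HS.
  assert (Hwn : w p n n = p ^ S n) by (unfold w; rewrite C_n_n, Nat.sub_diag; simpl; ring).
  rewrite Hwn in HB, HS.
  unfold Dv. fold (f (S n)) in *.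
  set (A := sm (fun i => w p n i * f (S i)) n) in *.
  set (W := sm (w p n) n) in *.
  assert (HW : W = p - p ^ S n) by lra. rewrite HW.
  set (Pj := p ^ S n) in *.
  replace (INR (S n + 1)) with (INR (S n) + 1) by (rewrite plus_INR; simpl; ring). match goal with |- ?L <= ?R => assert ((L - R)%R = p * Rpower (INR (S n) * p) q - (A + Pj * f (S n))) by ring end.
  lra.
Qed.

Lemma T_high N n : (1 <= N)%nat -> (N <= S n)%nat -> T N (S n) <= f N.
Proof.
  intros H1 H. unfold T.
  apply Rle_trans with (sm (fun i => f N * w p n i) N).
  { apply sm_le. intros i Hi. assert (Hw := w_nonneg p n i ltac:(lra)). assert (HfN := f_pos N).
    assert (Hfi := f_pos (S i)).
    destruct (Nat.eq_dec i n).
    - subst i. replace N with (S n) by lia. rewrite Rminus_diag. rewrite Rmult_0_r. apply Rmult_le_pos; lra.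
    - rewrite qbar_w by lia. nra. }
  rewrite sm_scal. assert (HfN := f_pos N).
  assert (sm (w p n) N <= sm (w p n) (S n)) by (apply sm_mono; auto; intros; apply w_nonneg; lra).
  rewrite B0 in H0. nra.
Qed.

End S.

Lemma ser_eq (a : nat -> R) l l' : is_series a l -> l = l' -> is_series a l'.
Proof. intros H E; rewrite <- E; exact H. Qed.

Theorem proposition9 (p q : R) (hp0 : 0 < p) (hp1 : p <= 1) (hq : 0 < q)
  (hpq : 0 <= -1 + q + Rpower p q) (pi : nat -> R) :
  stationary p pi -> ~ finite_moment q pi.
Proof.
  intros [Hpos [Hsum Hst]] Hmom.
  assert (SC : forall (cst : nat -> R) K,
    is_series (fun n => pi (S n) * sm (fun i => qbar p (S n) (S i) * cst i) K) 0).
  { intros cst K. induction K.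
    - simpl. apply is_series_Reals. intros eps Heps. exists 0%nat. intros m _.
      rewrite <- sm_R0. rewrite (sm_ext _ (fun _ => 0 * 0)) by (intros; ring).
      rewrite (sm_scal 0 (fun _ => 0)). rewrite Rmult_0_l. unfold Rdist. rewrite Rminus_diag, Rabs_R0. lra.
    - assert (H := is_series_plus _ _ _ _ IHK (is_series_scal_r (cst K) _ _ (Hst (S K) ltac:(lia)))).
      apply ser_eq with (l' := 0) in H; [| unfold plus; simpl; ring]. revert H. apply is_series_ext. intros n. simpl. unfold plus; simpl. ring. }
  assert (Hn0 : exists n0, 0 < pi (S n0)).
  { apply NNPP; intro Hc.
    assert (Hz : forall n, pi (S n) = 0).
    { intros n. destruct (Rlt_or_le 0 (pi (S n))) as [h|h]. exfalso; apply Hc; eauto.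
      assert (0 <= pi (S n)) by (apply Hpos; lia). lra. }
    apply is_series_Reals in Hsum. destruct (Hsum (1/2) ltac:(lra)) as [N HN].
    specialize (HN N ltac:(lia)). rewrite <- sm_R0 in HN.
    rewrite (sm_ext _ (fun _ => 0 * 0)) in HN by (intros; rewrite Hz; ring).
    rewrite (sm_scal 0 (fun _ => 0)), Rmult_0_l in HN. unfold Rdist in HN.
    rewrite Rabs_left in HN; lra. }
  destruct Hn0 as [n0 Hn0].
  assert (HD : 0 < Dv p q n0) by (apply Dv_pos; assumption).
  set (c0 := pi (S n0) * (p * Dv p q n0)).
  assert (Hc0 : 0 < c0) by (unfold c0; apply Rmult_lt_0_compat; [auto| apply Rmult_lt_0_compat; auto]).
  destruct Hmom as [L HL]. apply is_series_Reals in HL.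
  destruct (HL (c0/4) ltac:(lra)) as [N0 HN0].
  set (N := S (S (N0 + n0))).
  assert (Hu := SC (fun i => f q N - f q (S i)) N). fold (T p q N) in Hu.
  apply is_series_Reals in Hu. destruct (Hu (c0/4) ltac:(lra)) as [M0 HM0].
  set (M := (M0 + N + n0)%nat).
  set (a := fun n => Rpower (INR (S n)) q * pi (S n)) in *.
  assert (Ha : forall i, 0 <= a i).
  { intros i. unfold a. apply Rmult_le_pos. left; unfold Rpower; apply exp_pos. apply Hpos; lia. }
  assert (Hterm : forall i, (if Nat.eqb i n0 then c0 else 0) + - (if Nat.leb (S N0) i then a i else 0)
                   <= - (pi (S i) * T p q N (S i))).
  { intros i. assert (Hpi : 0 <= pi (S i)) by (apply Hpos; lia).
    destruct (lt_dec (S i) N) as [Hl|Hl].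
    - assert (HT : T p q N (S i) <= - (p * Dv p q i)) by (apply T_low; assumption).
      assert (HDi : 0 < Dv p q i) by (apply Dv_pos; assumption).
      assert (0 <= (if Nat.leb (S N0) i then a i else 0)) by (destruct (Nat.leb (S N0) i); [apply Ha|lra]).
      assert (pi (S i) * (p * Dv p q i) <= - (pi (S i) * T p q N (S i))).
      { assert (pi (S i) * T p q N (S i) <= pi (S i) * (- (p * Dv p q i))) by (apply Rmult_le_compat_l; auto). lra. }
      destruct (Nat.eqb_spec i n0).
      + subst i. unfold c0. lra.
      + assert (0 <= pi (S i) * (p * Dv p q i)) by (apply Rmult_le_pos; [auto| apply Rmult_le_pos; lra]). lra.
    - destruct (Nat.eqb_spec i n0); [unfold N in Hl; lia|].
      destruct (Nat.leb_spec (S N0) i); [|unfold N in Hl; lia].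
      assert (HT : T p q N (S i) <= f q N) by (apply T_high; try assumption; lia).
      assert (Hf : f q N <= f q (S i)) by (apply f_mono; try assumption; lia).
      assert (pi (S i) * T p q N (S i) <= pi (S i) * f q (S i)) by (apply Rmult_le_compat_l; lra).
      unfold a. fold (f q (S i)). lra. }
  assert (Hsm := sm_le _ _ (S M) (fun i _ => Hterm i)).
  rewrite sm_plus, sm_opp, sm_opp in Hsm.
  rewrite sm_ind1 in Hsm by (unfold M; lia).
  rewrite sm_ge in Hsm by (unfold M, N; lia).
  rewrite !sm_R0 in Hsm.
  specialize (HM0 M ltac:(unfold M; lia)).
  assert (H1 := HN0 M ltac:(unfold M, N; lia)).
  assert (H2 := HN0 N0 ltac:(lia)).
  unfold Rdist in *.
  apply Rabs_def2 in HM0. apply Rabs_def2 in H1. apply Rabs_def2 in H2. change (sum_f_R0 (fun n => pi (S n) * sm (fun i => qbar p (S n) (S i) * (f q N - f q (S i))) N) M) with (sum_f_R0 (fun i => pi (S i) * T p q N (S i)) M) in HM0.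
  lra.
Qed.
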